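(* Let $M,N$ be sharp, integral monoids, $\Gamma$ an $M$-metrised graph, $f:M\to N$ a monoid homomorphism with edge contraction $\Gamma'$ of $\Gamma$ along $f$, and $D\in\operatorname{Div}(\Gamma)$. Then $r(f_*(D))\ge r(D)$ (rank in $\Gamma'$ versus rank in $\Gamma$).
   Context: Monoids are commutative, sharp (only unit $0$), integral (cancellative), with groupification; $\langle m\rangle=\{km:k\in\mathbb Z\}$ and for $x=km$, $m\ne0$, $x/m:=k$. A graph is $(X,r,i)$, $X$ finite, $r$ idempotent, $i$ an involution, $i(x)=x\iff r(x)=x$; vertices $V$ = fixed points, half-edges $H=X\setminus V$, edges $\{e,i(e)\}$ joining $r(e),r(i(e))$, $H_v=\{e\in H:r(e)=v\}$; graphs are connected. An $M$-metrised graph adds $l:X\to M$ with $l(i(x))=l(x)$, $l(x)=0\iff x\in V$. Divisors: free abelian group on $V$, pointwise order; $\operatorname{Div}^k_+$ = effective divisors of degree $k$. $\operatorname{PL}(\Gamma)=\{g:V\to M^{gp}: g(r(e))-g(r(i(e)))\in\langle l(e)\rangle\ \forall e\in H\}$; $\Delta(g)=\sum_{v}\big(\sum_{e\in H_v}\frac{g(v)-g(r(i(e)))}{l(e)}\big)[v]$; $D\sim D'$ iff $D-D'\in\Delta(\operatorname{PL}(\Gamma))$; $|D|=\{E\ge0:E\sim D\}$; $r(D)=\max\{k\in\mathbb Z:|D-F|\ne\emptyset\ \forall F\in\operatorname{Div}^k_+(\Gamma)\}$. The edge contraction of $\Gamma$ along $f$ is the $N$-metrised graph $\Gamma'$ obtained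 as the quotient of $X$ by the equivalence relation generated by $e\sim r(e)\sim i(e)\sim r(i(e))$ for every $e\in H$ with $f(l(e))=0$, with induced $r,i$ and length $f\circ l$; $\varphi$ is the quotient map and $f_*(D)=\sum_{v}D(v)[\varphi(v)]$. *)

(* Defs.v *)
From HB Require Import structures.
From mathcomp Require Import all_boot all_order all_algebra.
Set Implicit Arguments. Unset Strict Implicit. Unset Printing Implicit Defensive.
Import Order.TTheory GRing.Theory Num.Theory.
Local Open Scope ring_scope.

(** Monoids.  A commutative integral (cancellative) monoid is represented as
    a submonoid [M] of an abelian group [G]; its groupification [M^gp] is the
    subgroup {a - b : a, b in M}. *)
Definition monoid_closed (G : zmodType) (M : pred G) :=
  0 \in M /\ (forall a b, a \in M -> b \in M -> a + b \in M).
Definition sharp (G : zmodType) (M : pred G) :=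
  forall a, a \in M -> - a \in M -> a = 0.
Definition sharp_int_monoid (G : zmodType) (M : pred G) :=
  monoid_closed M /\ sharp M.
Definition in_gp (G : zmodType) (M : pred G) (x : G) :=
  exists a b, [/\ a \in M, b \in M & x = a - b].
(** A monoid homomorphism M -> N (only its values on M matter). *)
Definition monoid_hom (G G' : zmodType) (M : pred G) (N : pred G') (f : G -> G') :=
  [/\ f 0 = 0, (forall a b, a \in M -> b \in M -> f (a + b) = f a + f b)
   & (forall a, a \in M -> f a \in N)].

Section Graph.
Variables (X : finType) (r i : X -> X).

Definition vertex (x : X) : bool := r x == x.

Definition is_graph :=
  [/\ (forall x, r (r x) = r x), (forall x, i (i x) = x)
    & (forall x, i x = x <-> r x = x)].

Definition adj : rel X :=
  fun x y => [exists e, [&& ~~ vertex e, r e == x & r (i e) == y]].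
Definition connected := forall v w, vertex v -> vertex w -> connect adj v w.

Variables (G : zmodType) (M : pred G) (l : X -> G).

Definition metrised :=
  forall x, [/\ l (i x) = l x, l x \in M & (l x = 0 <-> vertex x)].

(** Divisors: integer functions; only their values on vertices matter. *)
Definition divisor := X -> int.
Definition deg (D : divisor) : int := \sum_(v | vertex v) D v.
Definition effective (D : divisor) := forall v, vertex v -> 0 <= D v.

Definition PL (g : X -> G) :=
  (forall v, vertex v -> in_gp M (g v)) /\
  (forall e, ~~ vertex e -> exists k : int, g (r e) - g (r (i e)) = l e *~ k).

(** Delta(g) = D : the slope s e is (g(r e) - g(r (i e))) / l(e), i.e. the
    integer k with g(r e) - g(r (i e)) = k * l(e) (unique since l e <> 0 has
    infinite order in M^gp for sharp integral M). *)
Definition laplacian_is (g : X -> G) (D : divisor) :=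
  exists s : X -> int,
    (forall e, ~~ vertex e -> g (r e) - g (r (i e)) = l e *~ s e) /\
    (forall v, vertex v -> D v = \sum_(e | ~~ vertex e && (r e == v)) s e).

Definition principal (D : divisor) := exists g, PL g /\ laplacian_is g D.
Definition lin_equiv (D D' : divisor) := principal (fun x => D x - D' x).
Definition linsys_nonempty (D : divisor) :=
  exists E : divisor, effective E /\ lin_equiv E D.
Definition rank_cond (D : divisor) (k : int) :=
  forall F : divisor, effective F -> deg F = k ->
    linsys_nonempty (fun x => D x - F x).
Definition is_rank (D : divisor) (k : int) :=
  rank_cond D k /\ (forall k', rank_cond D k' -> k' <= k).
End Graph.

Section Contraction.
Variables (X : finType) (r i : X -> X) (G G' : zmodType) (l : X -> G) (f : G -> G').

Definition quad (e : X) : seq X := [:: e; r e; i e; r (i e)].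
(** generators of the equivalence relation: e ~ r e ~ i e ~ r (i e)
    for half-edges e with f (l e) = 0 *)
Definition cgen : rel X :=
  fun x y => [exists e, [&& ~~ vertex r e, f (l e) == 0, x \in quad e & y \in quad e]].

Lemma cgen_sym : symmetric cgen.
Proof.
move=> x y; apply/existsP/existsP => -[e /and4P [h1 h2 h3 h4]];
  by exists e; rewrite h1 h2 h3 h4.
Qed.

(** the quotient set X' : representatives of the classes of connect cgen *)
Definition cX := {x : X | fingraph.root cgen x == x}.

Lemma root_is_root (x : X) : fingraph.root cgen (fingraph.root cgen x) == fingraph.root cgen x.
Proof. by apply/eqP; apply: fingraph.root_root; apply: sym_connect_sym; exact: cgen_sym. Qed.

Definition phi (x : X) : cX := exist _ (fingraph.root cgen x) (root_is_root x).
Definition cr (y : cX) : cX := phi (r (val y)).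
Definition ci (y : cX) : cX := phi (i (val y)).
Definition cl (y : cX) : G' := f (l (val y)).

Definition pushforward (D : divisor X) : divisor cX :=
  fun y => \sum_(v | vertex r v && (phi v == y)) D v.
End Contraction.
Arguments phi {X} r i {G G'} l f x.
Arguments cr {X} r i {G G'} l f y.
Arguments ci {X} r i {G G'} l f y.
Arguments cl {X} r i {G G'} l f y.
Arguments pushforward {X} r i {G G'} l f D y.

(* Main.v *)
Require Import Defs.
From mathcomp Require Import all_boot all_order all_algebra.
From Stdlib Require Import ClassicalEpsilon.
From mathcomp Require Import zify.
Set Implicit Arguments. Unset Strict Implicit. Unset Printing Implicit Defensive.
Import Order.TTheory GRing.Theory Num.Theory.
Local Open Scope ring_scope.

Section Alg.
Variables (G G' : zmodType) (M : pred G) (N : pred G') (f : G -> G').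
Hypothesis (HM : sharp_int_monoid M) (HN : sharp_int_monoid N) (Hf : monoid_hom M N f).

Lemma mulrn_in m n : m \in M -> m *+ n \in M.
Proof.
case: HM => [[H0 HD] _] Hm; elim: n => [|n IH]; first by rewrite mulr0n.
by rewrite mulrS HD.
Qed.

Lemma f_mulrn m n : m \in M -> f (m *+ n) = f m *+ n.
Proof.
case: Hf => f0 fD _ Hm; elim: n => [|n IH]; first by rewrite !mulr0n.
by rewrite !mulrS fD ?IH // mulrn_in.
Qed.

Lemma torsion m k : m \in M -> m != 0 -> m *~ k = 0 -> k = 0.
Proof.
move=> Hm m0.
have pos : forall n : nat, m *+ n.+1 = 0 -> False.
  move=> n; rewrite mulrS => /eqP; rewrite addr_eq0 => /eqP Hn.
  case: HM => _ Hs; move/eqP: m0; apply; apply: Hs => //.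
  by rewrite {1}Hn opprK mulrn_in.
case: k => [[|n]|n] //=.
- by move=> /pos.
- by rewrite NegzE mulrNz => /eqP; rewrite oppr_eq0 => /eqP /pos.
Qed.

Definition pick2 (x : G) : G * G :=
  epsilon (inhabits (0, 0)) (fun p => [/\ p.1 \in M, p.2 \in M & x = p.1 - p.2]).
Definition Fgp (x : G) : G' := f (pick2 x).1 - f (pick2 x).2.

Lemma f_welldef a b c d : a \in M -> b \in M -> c \in M -> d \in M ->
  a - b = c - d -> f a - f b = f c - f d.
Proof.
case: Hf => _ fD _ Ha Hb Hc Hd E.
have : a + d = c + b by rewrite -(subrK b a) E; rewrite addrAC subrK.
move=> /(congr1 f); rewrite !fD // => E2.
by apply/eqP; rewrite subr_eq addrAC eq_sym subr_eq E2.
Qed.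

Lemma FgpE x a b : a \in M -> b \in M -> x = a - b -> Fgp x = f a - f b.
Proof.
move=> Ha Hb Ex; rewrite /Fgp /pick2.
case: (epsilon_spec (inhabits (0,0)) (fun p => [/\ p.1 \in M, p.2 \in M & x = p.1 - p.2])).
  by exists (a, b).
move=> H1 H2 H3; apply: f_welldef => //; by rewrite -H3.
Qed.

Lemma FgpB x y : in_gp M x -> in_gp M y -> Fgp (x - y) = Fgp x - Fgp y.
Proof.
case: (HM) => [[H0 HD] _]; case: Hf => _ fD _.
move=> [a [b [Ha Hb ->]]] [c [d [Hc Hd ->]]].
rewrite (FgpE Ha Hb erefl) (FgpE Hc Hd erefl) (@FgpE _ (a + d) (b + c)) ?HD //.
  rewrite !fD //; rewrite opprD opprB addrACA addrC. 
  by [].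
by rewrite opprB opprD addrACA.
Qed.

Lemma Fgp_mulrz m k : m \in M -> Fgp (m *~ k) = f m *~ k.
Proof.
case: (HM) => [[H0 HD] _]; case: Hf => f0 _ _ Hm.
case: k => n.
- by rewrite /= (@FgpE _ (m *+ n) 0) ?mulrn_in ?subr0 ?f0 ?subr0 ?f_mulrn.
- rewrite NegzE !mulrNz /= (@FgpE _ 0 (m *+ n.+1)) ?mulrn_in ?sub0r ?f0 ?sub0r ?f_mulrn //.
Qed.

Lemma Fgp_gp x : in_gp M x -> in_gp N (Fgp x).
Proof.
case: Hf => _ _ fN [a [b [Ha Hb Ex]]].
by exists (f a), (f b); rewrite (FgpE Ha Hb Ex) !fN.
Qed.
End Alg.

Section Gr.
Variables (G G' : zmodType) (M : pred G) (N : pred G') (f : G -> G').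
Variables (X : finType) (r i : X -> X) (l : X -> G).
Hypothesis (HM : sharp_int_monoid M) (HN : sharp_int_monoid N) (Hf : monoid_hom M N f).
Hypothesis (Hg : is_graph r i) (Hl : metrised r i M l).

Local Notation cg := (cgen r i l f).
Local Notation ph := (phi r i l f).
Local Notation V := (vertex r).

Lemma rI x : r (r x) = r x. Proof. by case: Hg. Qed.
Lemma iI x : i (i x) = x. Proof. by case: Hg. Qed.
Lemma vr x : V (r x). Proof. by rewrite /vertex rI. Qed.
Lemma li x : l (i x) = l x. Proof. by case: (Hl x). Qed.
Lemma vi x : V (i x) = V x.
Proof.
case: Hg => _ Hi Hfix; rewrite /vertex.
apply/eqP/eqP => H.
- by move/Hfix: H; rewrite Hi => H; apply/Hfix; rewrite -{1}H.
- by apply/Hfix; rewrite Hi; move/Hfix: H => ->.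
Qed.
Lemma csym : connect_sym cg. Proof. exact/sym_connect_sym/cgen_sym. Qed.
Lemma phiK y : ph (val y) = y.
Proof. by apply: val_inj => /=; apply/eqP; case: y. Qed.
Lemma phiE x y : connect cg x y -> ph x = ph y.
Proof. by move/(fingraph.rootP csym) => H; apply: val_inj => /=. Qed.
Lemma conn_phi x : connect cg x (val (ph x)).
Proof. exact: connect_root. Qed.

Lemma nc_cgen e z : ~~ V e -> f (l e) != 0 -> cg e z = false.
Proof.
move=> He Hfe; rewrite /cgen; apply/negbTE/negP => /existsP [e2 /and4P [H2 /eqP f2 Hin _]].
move: Hin; rewrite !inE => /or4P [] /eqP E.
- by rewrite E f2 eqxx in Hfe.
- by move: He; rewrite E vr.
- by move: Hfe; rewrite E li f2 eqxx.
- by move: He; rewrite E vr.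
Qed.

Lemma nc_conn e z : ~~ V e -> f (l e) != 0 -> connect cg e z -> z = e.
Proof.
move=> He Hfe /connectP [[|x p] /= Hp ->] //.
by move: Hp; rewrite nc_cgen.
Qed.

Lemma nc_root e : ~~ V e -> f (l e) != 0 -> val (ph e) = e.
Proof. by move=> He Hfe; apply: nc_conn (conn_phi e). Qed.

Lemma c_phi e : ~~ V e -> f (l e) = 0 -> ph (r (i e)) = ph (r e).
Proof.
move=> He Hfe; apply/esym/phiE/connect1; rewrite /cgen; apply/existsP; exists e.
by rewrite He Hfe eqxx !inE !eqxx !orbT.
Qed.

Lemma c_phi2 e : ~~ V e -> f (l e) = 0 -> ph (r e) = ph e.
Proof.
move=> He Hfe; apply/esym/phiE/connect1; rewrite /cgen; apply/existsP; exists e.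
by rewrite He Hfe eqxx !inE !eqxx !orbT.
Qed.

Section H.
Variables (g : X -> G) (s : X -> int).
Hypothesis Hs : forall e, ~~ V e -> g (r e) - g (r (i e)) = l e *~ s e.
Hypothesis Hgp : forall v, V v -> in_gp M (g v).

Definition h x := Fgp M f (g (r x)).

Lemma h_diff e : ~~ V e -> h e - h (i e) = f (l e) *~ s e.
Proof.
move=> He; rewrite /h -(FgpB HM Hf); try by apply: Hgp; apply: vr.
move: (Hs He) => ->; rewrite (Fgp_mulrz HM Hf) //.
by case: (Hl e).
Qed.

Lemma hr x : h (r x) = h x. Proof. by rewrite /h rI. Qed.

Lemma h_cgen x y : cg x y -> h x = h y.
Proof.
rewrite /cgen => /existsP [e /and4P [He /eqP Hfe Hx Hy]].
have E : h e = h (i e).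
  by apply/eqP; rewrite -subr_eq0 h_diff // Hfe mul0rz.
have Q z : z \in quad r i e -> h z = h e.
  rewrite !inE => /or4P [] /eqP -> //; rewrite ?hr //.
by rewrite (Q _ Hx) (Q _ Hy).
Qed.

Lemma h_conn x y : connect cg x y -> h x = h y.
Proof.
move=> /connectP [p Hp ->]; elim: p x Hp => //= z p IH x /andP [Hxz Hp].
by rewrite (h_cgen Hxz) IH.
Qed.

Lemma hphi x : h (val (ph x)) = h x.
Proof. by rewrite (h_conn (conn_phi x)). Qed.

Lemma s_inv e : ~~ V e -> s (i e) = - s e.
Proof.
move=> He.
have Hie : ~~ V (i e) by rewrite vi.
have H1 := Hs He; have H2 := Hs Hie; rewrite iI li in H2.
have : l e *~ (s e + s (i e)) = 0 by rewrite mulrzDr -H1 -H2 addrA subrK subrr.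
case: (Hl e) => _ Hm [Hv _].
have Hne : l e != 0 by apply/eqP => /Hv H; rewrite H in He.
move/(torsion HM Hm Hne) => H.
by apply/eqP; rewrite -addr_eq0 addrC H.
Qed.
End H.
End Gr.

Section Main.
Variables (G G' : zmodType) (M : pred G) (N : pred G') (f : G -> G').
Variables (X : finType) (r i : X -> X) (l : X -> G).
Hypothesis (HM : sharp_int_monoid M) (HN : sharp_int_monoid N) (Hf : monoid_hom M N f).
Hypothesis (Hg : is_graph r i) (Hl : metrised r i M l).

Local Notation cg := (cgen r i l f).
Local Notation ph := (phi r i l f).
Local Notation V := (vertex r).
Local Notation CR := (cr r i l f).
Local Notation CI := (ci r i l f).
Local Notation CL := (cl r i l f).
Local Notation CV := (vertex CR).

Lemma cvert_of v : v = r (val (ph v)) -> CV (ph v).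
Proof. by move=> Ev; rewrite /vertex /cr -Ev eqxx. Qed.

Lemma main_aux (D : divisor X) a :
  rank_cond r i M l D a -> rank_cond CR CI N CL (pushforward r i l f D) a.
Proof.
move=> HrD F' F'eff F'deg.
pose F : divisor X := fun v => if v == r (val (ph v)) then F' (ph v) else 0.
have Feff : effective r F.
  move=> v _; rewrite /F; case: eqP => // Ev.
  by apply: F'eff; apply: cvert_of.
have Fdeg : deg r F = a.
  rewrite -F'deg /deg.
  rewrite [RHS](reindex_onto ph (fun y => r (val y))); last first.
    by move=> y /eqP.
  rewrite big_mkcond (big_mkcond (fun j => CV (ph j) && _)). apply: (@eq_bigr _ _ _ _ _ _ _ _) => v _; rewrite /F [r _ == v]eq_sym.
  case: eqP => [Ev|_]; last by rewrite andbF; case: ifP.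
  by rewrite cvert_of // {1}Ev (vr Hg).
have [E [Eeff [g [[Hgp _] [s [Hs Hlap]]]]]] := HrD F Feff Fdeg.
exists (pushforward r i l f E); split.
  by move=> y _; apply: sumr_ge0 => v /andP [vv _]; apply: Eeff.
pose g' (y : cX r i l f) := h M f r g (val y).
have Hedge : forall y, ~~ CV y -> g' (CR y) - g' (CR (CI y)) = CL y *~ s (val y).
  move=> y Hy.
  have He : ~~ V (val y).
    apply: contra Hy => /eqP Hv; rewrite /vertex /cr Hv phiK //.
  rewrite /g' /cr /ci !(hphi HM Hf Hg Hl Hs Hgp) !(hr M f Hg) (hphi HM Hf Hg Hl Hs Hgp).
  exact: (h_diff HM Hf Hg Hl Hs Hgp).
exists g'; split; first split.
- move=> y _; apply: (Fgp_gp Hf); apply: Hgp; exact: (vr Hg).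
- by move=> y Hy; exists (s (val y)); apply: Hedge.
exists (fun y => s (val y)); split; first exact: Hedge.
move=> y Hy.
have HyE : ph (r (val y)) = y by apply/eqP.
have StepA : pushforward r i l f F y = F' y.
  rewrite /pushforward (bigD1 (r (val y))) /=; last by rewrite (vr Hg) HyE eqxx.
  rewrite big1 ?addr0; last first.
    move=> v /andP [/andP [_ /eqP pv] nv]; rewrite /F pv.
    by case: eqP => // Ev; rewrite Ev eqxx in nv.
  by rewrite /F HyE eqxx.
rewrite -StepA /pushforward -!sumrB.
rewrite (eq_bigr (fun v => \sum_(e | ~~ V e && (r e == v)) s e)); last first.
  by move=> v /andP [vv _]; rewrite -Hlap.
transitivity (\sum_(e | ~~ V e && (ph (r e) == y)) s e).
  rewrite [RHS](partition_big r (fun v => V v && (ph v == y))); last first.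
    by move=> e /andP [_ pe]; rewrite (vr Hg).
  apply: eq_bigr => v /andP [_ /eqP pv]; apply: eq_bigl => e.
  case: (r e =P v) => [re|]; last by rewrite !andbF.
  by rewrite re pv eqxx !andbT.
rewrite (bigID (fun e => f (l e) == 0)) /=.
have C0 : \sum_(e | (~~ V e && (ph (r e) == y)) && (f (l e) == 0)) s e = 0.
  set S := LHS.
  have : S = - S.
    rewrite /S [LHS](reindex_inj (can_inj (iI Hg))) /= -sumrN.
    apply: eq_big => e.
      rewrite (vi Hg) (li Hl).
      case He: (V e) => //=; case Hfe: (f (l e) == 0); rewrite ?andbF ?andbT //.
      by rewrite (c_phi i (negbT He) (eqP Hfe)).
    move=> /andP [/andP [He _] /eqP Hfe].
    by have := s_inv HM Hg Hl Hs He; rewrite (iI Hg) => ->; rewrite opprK.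
  clearbody S; move=> HS; lia.
rewrite C0 add0r.
rewrite (reindex (fun y : cX r i l f => val y)); last first.
  exists ph => [y' _ | e]; first exact: phiK.
  rewrite inE => /andP [/andP [He _] Hfe].
  exact: (nc_root Hg Hl He Hfe).
apply: eq_bigl => y'.
set e := val y'.
apply/idP/idP.
- move=> /andP [/andP [He /eqP Hr] Hfe].
  rewrite /vertex /cr -/e Hr eqxx andbT.
  apply/negP => /eqP Hyy.
  have : ph (r e) = ph e by rewrite Hr Hyy phiK.
  move=> /(congr1 val); rewrite (nc_root Hg Hl He Hfe) => Hc.
  have Hc2 : connect cg (r e) (val (ph (r e))) by apply: connect_root.
  rewrite Hc csym in Hc2.
  have := nc_conn Hg Hl He Hfe Hc2.
  by move=> Hre; rewrite /vertex Hre eqxx in He.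
- move=> /andP [Hv /eqP Hc].
  have He : ~~ V e.
    by apply: contra Hv => /eqP Hre; rewrite /vertex /cr -/e Hre phiK.
  have Hfe : f (l e) != 0.
    apply/eqP => Hf0; move: Hv; rewrite /vertex /cr -/e (c_phi2 i He Hf0) phiK eqxx //.
  by rewrite He Hfe /= -Hc /cr andbT.
Qed.
End Main.

Theorem lemma4p4 (G G' : zmodType) (M : pred G) (N : pred G') (f : G -> G')
  (X : finType) (r i : X -> X) (l : X -> G) (D : X -> int) (a b : int) :
  sharp_int_monoid M -> sharp_int_monoid N -> monoid_hom M N f ->
  is_graph r i -> connected r i -> metrised r i M l ->
  is_rank r i M l D a ->
  is_rank (cr r i l f) (ci r i l f) N (cl r i l f) (pushforward r i l f D) b ->
  a <= b.
Proof.
move=> HM HN Hf Hg _ Hl [HrD _] [_ Hmax].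
exact: (Hmax a (main_aux HM Hf Hg Hl HrD)).
Qed.
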